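(* Let $R$ be a commutative Noetherian ring, $M$ a finitely generated $R$-module, and $X \subseteq \mathrm{Spec}(R)$ a basic set. For any subset $S \subseteq M$ and any integer $t \in \mathbb{N}$, the set $Y_t := \{\mathfrak{p} \in X \mid \delta_\mathfrak{p}(S,M) \leq t\}$ is closed in $X$ (with the subspace topology from the Zariski topology on $\mathrm{Spec}(R)$).
   Context: A subset $X \subseteq \mathrm{Spec}(R)$ is basic if, whenever the intersection of a family of primes in $X$ is a prime ideal, that intersection belongs to $X$. For $S \subseteq M$ let $\langle S \rangle$ be the $R$-submodule generated by $S$. For a prime $\mathfrak{p}$, $\delta_\mathfrak{p}(S,M)$ is the largest integer $n \ge 0$ such that there is a free $R_\mathfrak{p}$-submodule $G \subseteq \langle S\rangle_\mathfrak{p}$ of rank $n$ which is a direct summand of $M_\mathfrak{p}$ (i.e. there is a map $M_\mathfrak{p} \to G$ whose composition with $G \subseteq M_\mathfrak{p}$ is the identity of $G$). Equivalently, it is the largest $n$ such that some free direct summand $F$ of $M_\mathfrak{p}$ has the property that the image of $S$ under $M_\mathfrak{p} \to F \to F/\mathfrak{p}F$ spans a vector space of dimension $n$ over $R_\mathfrak{p}/\mathfrak{p}R_\mathfrak{p}$. *)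

(* Defs.v *)
From HB Require Import structures.
From mathcomp Require Import all_boot all_algebra.
Set Implicit Arguments. Unset Strict Implicit. Unset Printing Implicit Defensive.
Import GRing.Theory.
Local Open Scope ring_scope.

Section Defs.
Variable R : comNzRingType.

Definition is_ideal (I : R -> Prop) : Prop :=
  I 0 /\ (forall x y, I x -> I y -> I (x + y)) /\ (forall r x, I x -> I (r * x)).

Definition is_prime_ideal (I : R -> Prop) : Prop :=
  is_ideal I /\ ~ I 1 /\ (forall x y, I (x * y) -> I x \/ I y).

Definition noetherian : Prop :=
  forall I : R -> Prop, is_ideal I ->
    exists s : seq R, forall x, I x <->
      exists c : 'I_(size s) -> R, x = \sum_(i < size s) c i * s`_i.

Definition spec := {p : R -> Prop | is_prime_ideal p}.

Definition basic (X : spec -> Prop) : Prop :=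
  forall F : spec -> Prop, (forall p, F p -> X p) ->
    forall q : spec, (forall x, sval q x <-> (forall p, F p -> sval p x)) -> X q.

(* Y is closed in X for the subspace topology induced by the Zariski topology:
   Y = X \cap V(I) for some subset I of R. *)
Definition zariski_closed_in (X Y : spec -> Prop) : Prop :=
  exists I : R -> Prop, forall p, Y p <-> (X p /\ forall x, I x -> sval p x).

(* R_p, given by the defining (universal) properties of the localization
   of R at the prime p: f : R -> A is a ring map, inverts R \ p, every element
   is a fraction f r / f s with s \notin p, and the kernel consists of elements
   killed by some s \notin p. *)
Definition ring_localization (p : spec) (A : comUnitRingType) (f : R -> A) : Prop :=
  f 1 = 1 /\ (forall x y, f (x + y) = f x + f y) /\ (forall x y, f (x * y) = f x * f y)
  /\ (forall s, ~ sval p s -> f s \is a GRing.unit)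
  /\ (forall a, exists r s, ~ sval p s /\ f s * a = f r)
  /\ (forall r, f r = 0 -> exists s, ~ sval p s /\ s * r = 0).

Variable M : lmodType R.

Definition fin_gen : Prop :=
  exists s : seq M, forall m, exists c : 'I_(size s) -> R,
    m = \sum_(i < size s) c i *: s`_i.

Definition gen_submod (S : M -> Prop) (m : M) : Prop :=
  exists n (c : 'I_n -> R) (x : 'I_n -> M),
    (forall i, S (x i)) /\ m = \sum_(i < n) c i *: x i.

(* M_p (over A = R_p via f), given by the defining properties of the
   localization of M at p: g is R-linear (over f), every element is g m / f s
   with s \notin p, and g m = 0 iff s m = 0 for some s \notin p. *)
Definition module_localization (p : spec) (A : comUnitRingType) (f : R -> A)
    (N : lmodType A) (g : M -> N) : Prop :=
  (forall x y, g (x + y) = g x + g y) /\ (forall r x, g (r *: x) = f r *: g x)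
  /\ (forall y, exists m s, ~ sval p s /\ f s *: y = g m)
  /\ (forall m, g m = 0 -> exists s, ~ sval p s /\ s *: m = 0).

Definition loc_submod (p : spec) (A : comUnitRingType) (f : R -> A)
    (N : lmodType A) (g : M -> N) (S : M -> Prop) (y : N) : Prop :=
  exists m s, gen_submod S m /\ ~ sval p s /\ f s *: y = g m.

End Defs.

Definition span_fam (A : pzRingType) (N : lmodType A) n (b : 'I_n -> N) (y : N) : Prop :=
  exists c : 'I_n -> A, y = \sum_(i < n) c i *: b i.

(* There is a free A-submodule G of N of rank n (G = span of the basis b),
   contained in T, which is a direct summand of N: there is an A-linear
   r : N -> G whose composition with the inclusion G \subseteq N is id_G. *)
Definition has_free_summand_in (A : pzRingType) (N : lmodType A) (T : N -> Prop)
    (n : nat) : Prop :=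
  exists b : 'I_n -> N,
    (forall i, T (b i))
    /\ (forall c : 'I_n -> A, \sum_(i < n) c i *: b i = 0 -> forall i, c i = 0)
    /\ exists r : N -> N,
         (forall a x y, r (a *: x + y) = a *: r x + r y)
         /\ (forall y, span_fam b (r y))
         /\ (forall y, span_fam b y -> r y = y).

Definition is_largest_free_summand (A : pzRingType) (N : lmodType A) (T : N -> Prop)
    (d : nat) : Prop :=
  has_free_summand_in T d /\ forall n, has_free_summand_in T n -> (n <= d)%N.

Definition is_delta (R : comNzRingType) (M : lmodType R) (p : spec R)
    (A : comUnitRingType) (f : R -> A) (N : lmodType A) (g : M -> N)
    (S : M -> Prop) (d : nat) : Prop :=
  is_largest_free_summand (loc_submod p f g S) d.

(* Main.v *)
Require Import Defs.
From HB Require Import structures.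
From mathcomp Require Import all_boot all_algebra.
From mathcomp Require Import ring.
From Stdlib Require Import Classical IndefiniteDescription.
Set Implicit Arguments. Unset Strict Implicit. Unset Printing Implicit Defensive.
Import GRing.Theory.
Local Open Scope ring_scope.

Lemma fchoice (A B : Type) (P : A -> B -> Prop) :
  (forall a, exists b, P a b) -> exists h : A -> B, forall a, P a (h a).
Proof.
move=> H; exists (fun a => proj1_sig (constructive_indefinite_description _ (H a))).
by move=> a; case: (constructive_indefinite_description _ (H a)).
Qed.

Section Basic.
Variable R : comNzRingType.
Implicit Types (p q : spec R) (x y : R).

Lemma prime_n1 p : ~ sval p 1.
Proof. by case: (svalP p) => _ []. Qed.

Lemma ideal_mull p x y : sval p y -> sval p (x * y).
Proof. by case: (svalP p) => [[_ [_ H]] _] /H. Qed.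

Lemma ideal_mulr p x y : sval p x -> sval p (x * y).
Proof. by rewrite mulrC; apply: ideal_mull. Qed.

Lemma prime_nmul p x y : ~ sval p x -> ~ sval p y -> ~ sval p (x * y).
Proof. by case: (svalP p) => _ [_ H] nx ny /H []. Qed.

Lemma nmul_l p x y : ~ sval p (x * y) -> ~ sval p x.
Proof. by move=> H /(ideal_mulr y). Qed.

Lemma nmul_r p x y : ~ sval p (x * y) -> ~ sval p y.
Proof. by move=> H /(ideal_mull x). Qed.

Lemma nprod p (I : finType) (F : I -> R) :
  (forall i, ~ sval p (F i)) -> ~ sval p (\prod_i F i).
Proof.
move=> H; apply: (big_ind (fun x => ~ sval p x)); first exact: prime_n1.
  by move=> ? ?; apply: prime_nmul.
by move=> i _; apply: H.
Qed.

Lemma nprod_inv p (I : finType) (F : I -> R) i :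
  ~ sval p (\prod_j F j) -> ~ sval p (F i).
Proof. by rewrite (bigD1 i) //=; apply: nmul_l. Qed.

Lemma prodD1 (I : finType) (F : I -> R) i :
  \prod_j F j = F i * \prod_(j | j != i) F j.
Proof. by rewrite (bigD1 i). Qed.

Section RL.
Variables (p : spec R) (A : comUnitRingType) (f : R -> A).
Hypothesis Hf : ring_localization p f.

Lemma f1 : f 1 = 1. Proof. by case: Hf. Qed.
Lemma fD x y : f (x + y) = f x + f y. Proof. by case: Hf => _ [H _]; apply: H. Qed.
Lemma fM x y : f (x * y) = f x * f y. Proof. by case: Hf => _ [_ [H _]]; apply: H. Qed.
Lemma funit s : ~ sval p s -> f s \is a GRing.unit.
Proof. by case: Hf => _ [_ [_ [H _]]]; apply: H. Qed.
Lemma ffrac a : exists r s, ~ sval p s /\ f s * a = f r.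
Proof. by case: Hf => _ [_ [_ [_ [H _]]]]; apply: H. Qed.
Lemma fker r : f r = 0 -> exists s, ~ sval p s /\ s * r = 0.
Proof. by case: Hf => _ [_ [_ [_ [_ H]]]]; apply: H. Qed.
Lemma f0 : f 0 = 0.
Proof. by apply: (@addrI _ (f 0)); rewrite -fD !addr0. Qed.
Lemma fN x : f (- x) = - f x.
Proof. by apply: (@addrI _ (f x)); rewrite -fD !subrr f0. Qed.
Lemma fB x y : f (x - y) = f x - f y.
Proof. by rewrite fD fN. Qed.
Lemma fsum (I : Type) (r : seq I) (P : pred I) (F : I -> R) :
  f (\sum_(i <- r | P i) F i) = \sum_(i <- r | P i) f (F i).
Proof. exact: (big_morph f fD f0). Qed.
Lemma fkill s x : ~ sval p s -> s * x = 0 -> f x = 0.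
Proof.
move=> ns sx; rewrite -(mulKr (funit ns) (f x)) -fM sx f0.
by rewrite mulr0.
Qed.
Lemma cdenom (I : finType) (a : I -> A) :
  exists w (x : I -> R), ~ sval p w /\ forall i, f w * a i = f (x i).
Proof.
have [h Hh] : exists h : I -> R * R, forall i, ~ sval p (h i).2 /\ f (h i).2 * a i = f (h i).1.
  apply: (@fchoice I (R * R) (fun i rs => ~ sval p rs.2 /\ f rs.2 * a i = f rs.1)) => i.
  by have [r0 [s0 H]] := ffrac (a i); exists (r0, s0).
exists (\prod_i (h i).2), (fun i => (\prod_(j | j != i) (h j).2) * (h i).1); split.
  by apply: nprod => i; case: (Hh i).
move=> i; case: (Hh i) => _ e.
rewrite (prodD1 _ i) !fM -e; ring.
Qed.
End RL.

Section ML.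
Variables (M : lmodType R) (p : spec R) (A : comUnitRingType) (f : R -> A).
Variables (N : lmodType A) (g : M -> N).
Hypothesis Hg : module_localization p f g.
Lemma gD (x y : M) : g (x + y) = g x + g y. Proof. by case: Hg => H _; apply: H. Qed.
Lemma gZ (r : R) (x : M) : g (r *: x) = f r *: g x. Proof. by case: Hg => _ [H _]; apply: H. Qed.
Lemma gfrac (y : N) : exists m s, ~ sval p s /\ f s *: y = g m.
Proof. by case: Hg => _ [_ [H _]]; apply: H. Qed.
Lemma gker (m : M) : g m = 0 -> exists s, ~ sval p s /\ s *: m = 0.
Proof. by case: Hg => _ [_ [_ H]]; apply: H. Qed.
Lemma g0 : g 0 = 0.
Proof. by apply: (@addrI _ (g 0)); rewrite -gD !addr0. Qed.
Lemma gN (x : M) : g (- x) = - g x.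
Proof. by apply: (@addrI _ (g x)); rewrite -gD !subrr g0. Qed.
Lemma gsum (I : Type) (r : seq I) (P : pred I) (F : I -> M) :
  g (\sum_(i <- r | P i) F i) = \sum_(i <- r | P i) g (F i).
Proof. exact: (big_morph g gD g0). Qed.
End ML.
End Basic.
Section LinR.
Variables (R : comNzRingType) (M : lmodType R) (Phi : M -> R).
Hypothesis Hl : forall a m1 m2, Phi (a *: m1 + m2) = a * Phi m1 + Phi m2.
Lemma Phi0 : Phi 0 = 0.
Proof. by have := Hl 1 0 0; rewrite scaler0 addr0 mul1r -{1}[Phi 0]addr0 => /addrI <-. Qed.
Lemma PhiD m1 m2 : Phi (m1 + m2) = Phi m1 + Phi m2.
Proof. by rewrite -{1}[m1]scale1r Hl mul1r. Qed.
Lemma PhiZ a m1 : Phi (a *: m1) = a * Phi m1.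
Proof. by rewrite -[a *: m1]addr0 Hl Phi0 addr0. Qed.
Lemma PhiN m1 : Phi (- m1) = - Phi m1.
Proof. by rewrite -scaleN1r PhiZ mulN1r. Qed.
Lemma PhiB m1 m2 : Phi (m1 - m2) = Phi m1 - Phi m2.
Proof. by rewrite PhiD PhiN. Qed.
Lemma Phisum (I : Type) (r : seq I) (P : pred I) (F : I -> M) :
  Phi (\sum_(i <- r | P i) F i) = \sum_(i <- r | P i) Phi (F i).
Proof. exact: (big_morph Phi PhiD Phi0). Qed.
End LinR.

Section BuildQ.
Variables (R : comNzRingType) (M : lmodType R) (S : M -> Prop).
Variables (q : spec R) (A : comUnitRingType) (f : R -> A).
Variables (N : lmodType A) (g : M -> N).
Hypothesis Hf : ring_localization q f.
Hypothesis Hg : module_localization q f g.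

Lemma build_q n (m : 'I_n -> M) (Phi : 'I_n -> M -> R) (kap : 'I_n -> R) :
  (forall j, gen_submod S (m j)) ->
  (forall i a m1 m2, Phi i (a *: m1 + m2) = a * Phi i m1 + Phi i m2) ->
  (forall i, ~ sval q (kap i)) ->
  (forall i j, f (Phi i (m j)) = if i == j then f (kap j) else 0) ->
  has_free_summand_in (loc_submod q f g S) n.
Proof.
move=> Sm Hl nk Hd.
have [h Hh] : exists h : N -> M * R, forall y, ~ sval q (h y).2 /\ f (h y).2 *: y = g (h y).1.
  apply: (@fchoice N (M * R) (fun y ms => ~ sval q ms.2 /\ f ms.2 *: y = g ms.1)) => y.
  by have [m0 [s0 H]] := gfrac Hg y; exists (m0, s0).
pose Psi i (y : N) := f (Phi i (h y).1) / f (h y).2.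
have PsiE i y m0 s : ~ sval q s -> f s *: y = g m0 -> f s * Psi i y = f (Phi i m0).
  move=> ns Hy; rewrite /Psi; case: (Hh y); case: (h y) => m1 s1 /= ns1 Hy1.
  have e1 : g (s1 *: m0 - s *: m1) = 0.
    rewrite (gD Hg) (gN Hg) !(gZ Hg) -Hy -Hy1 !scalerA mulrC subrr //.
  have [s' [ns' Hs']] := gker Hg e1.
  have e2 : s' * (s1 * Phi i m0 - s * Phi i m1) = 0.
    by rewrite -!(PhiZ (Hl i)) -(PhiB (Hl i)) -(PhiZ (Hl i)) Hs' (Phi0 (Hl i)).
  have e3 := fkill Hf ns' e2.
  rewrite (fB Hf) !(fM Hf) in e3; move/eqP: e3; rewrite subr_eq0 => /eqP e3.
  apply: (mulIr (funit Hf ns1)).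
  by rewrite /= -mulrA divrK ?(funit Hf ns1) // -e3 mulrC.
have Psil i a y1 y2 : Psi i (a *: y1 + y2) = a * Psi i y1 + Psi i y2.
  have [ra [sa [nsa Ha]]] := ffrac Hf a.
  case: (Hh y1) => n1 e1; case: (Hh y2) => n2 e2.
  have ns : ~ sval q (sa * (h y1).2 * (h y2).2) by do 2 apply: prime_nmul => //.
  have Hy : f (sa * (h y1).2 * (h y2).2) *: (a *: y1 + y2)
      = g ((ra * (h y2).2) *: (h y1).1 + (sa * (h y1).2) *: (h y2).1).
    rewrite (gD Hg) !(gZ Hg) -e1 -e2 !scalerA scalerDr scalerA !(fM Hf) -Ha.
    by congr (_ *: _ + _ *: _); ring.
  apply: (mulrI (funit Hf ns)); rewrite (PsiE i _ _ _ ns Hy) (Hl i) (PhiZ (Hl i)) (fD Hf) !(fM Hf).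
  rewrite -(PsiE i _ _ _ n1 e1) -(PsiE i _ _ _ n2 e2) -Ha; ring.
have Psim i j : Psi i (g (m j)) = if i == j then f (kap j) else 0.
  have := PsiE i (g (m j)) (m j) 1 (@prime_n1 _ q).
  by rewrite (f1 Hf) scale1r mul1r -Hd => ->.
have Psisum i (c : 'I_n -> A) : Psi i (\sum_j c j *: g (m j)) = c i * f (kap i).
  rewrite (Phisum (Psil i)) (eq_bigr (fun j => c j * Psi i (g (m j)))); last first.
    by move=> j _; rewrite (PhiZ (Psil i)).
  rewrite (bigD1 i) //= Psim eqxx big1 ?addr0 //.
  by move=> j; rewrite eq_sym => /negbTE ne; rewrite Psim ne mulr0.
exists (fun j => g (m j)); split.
  move=> j; exists (m j), 1; split; first exact: Sm.
  by split; [exact: prime_n1 | rewrite (f1 Hf) scale1r].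
split.
  move=> c Hc i; have := Psisum i c; rewrite Hc (Phi0 (Psil i)) => /esym.
  by move=> H; apply: (mulIr (funit Hf (nk i))); rewrite /= mul0r.
exists (fun y => \sum_i (Psi i y / f (kap i)) *: g (m i)); split.
  move=> a x y; rewrite scaler_sumr -big_split; apply: eq_bigr => i _ /=.
  by rewrite Psil mulrDl scalerDl scalerA !mulrA.
split; first by move=> y; exists (fun i => Psi i y / f (kap i)).
move=> y [c ->]; apply: eq_bigr => i _.
by rewrite Psisum mulrK // (funit Hf (nk i)).
Qed.
End BuildQ.
Section LinM.
Variables (A : pzRingType) (U V : lmodType A) (r : U -> V).
Hypothesis Hl : forall a x y, r (a *: x + y) = a *: r x + r y.
Lemma r0 : r 0 = 0.
Proof. by have := Hl 1 0 0; rewrite scaler0 addr0 scale1r -{1}[r 0]addr0 => /addrI <-. Qed.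
Lemma rD x y : r (x + y) = r x + r y.
Proof. by rewrite -{1}[x]scale1r Hl scale1r. Qed.
Lemma rZ a x : r (a *: x) = a *: r x.
Proof. by rewrite -[a *: x]addr0 Hl r0 addr0. Qed.
Lemma rsum (I : Type) (s : seq I) (P : pred I) (F : I -> U) :
  r (\sum_(i <- s | P i) F i) = \sum_(i <- s | P i) r (F i).
Proof. exact: (big_morph r rD r0). Qed.
End LinM.

Lemma killer (R : comNzRingType) (p : spec R) (J : R -> Prop) :
  noetherian R -> is_ideal J ->
  (forall z, J z -> exists v, ~ sval p v /\ v * z = 0) ->
  exists u, ~ sval p u /\ forall z, J z -> u * z = 0.
Proof.
move=> Hn HJ Hk; have [s Hs] := Hn J HJ.
have Js (t : 'I_(size s)) : J s`_t.
  apply/Hs; exists (fun t' => if t' == t then 1 else 0).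
  rewrite (bigD1 t) //= eqxx mul1r big1 ?addr0 //.
  by move=> t' /negbTE ->; rewrite mul0r.
have [v Hv] : exists v : 'I_(size s) -> R, forall t, ~ sval p (v t) /\ v t * s`_t = 0.
  by apply: (@fchoice _ _ (fun (t : 'I_(size s)) (vt : R) => ~ sval p vt /\ vt * s`_t = 0)) => t; apply: Hk.
exists (\prod_t v t); split; first by apply: nprod => t; case: (Hv t).
move=> z /Hs [c ->]; rewrite mulr_sumr big1 // => t _.
rewrite (prodD1 _ t); have e := proj2 (Hv t).
transitivity ((\prod_(j | j != t) v j) * c t * (v t * s`_t)); first by ring.
by rewrite e mulr0.
Qed.

Section DataP.
Variables (R : comNzRingType) (M : lmodType R) (S : M -> Prop).
Variables (p : spec R) (A : comUnitRingType) (f : R -> A).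
Variables (N : lmodType A) (g : M -> N).
Hypothesis Hf : ring_localization p f.
Hypothesis Hg : module_localization p f g.
Hypothesis Hn : noetherian R.
Variable es : seq M.
Hypothesis Hes : forall m, exists c : 'I_(size es) -> R, m = \sum_(i < size es) c i *: es`_i.

Lemma data_p n : has_free_summand_in (loc_submod p f g S) n ->
  exists (m : 'I_n -> M) (Phi : 'I_n -> M -> R) (kap : 'I_n -> R) (V : 'I_n -> 'I_n -> R),
   [/\ forall j, gen_submod S (m j),
       forall i a m1 m2, Phi i (a *: m1 + m2) = a * Phi i m1 + Phi i m2,
       forall i, ~ sval p (kap i),
       forall i j, ~ sval p (V i j) &
       forall i j, V i j * (Phi i (m j) - (if i == j then kap j else 0)) = 0].
Proof.
case=> b [Tb [Ib [r [rlin [rspan rid]]]]].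
pose k := size es; pose e (l : 'I_k) := es`_l.
have [ms Hms] : exists ms : 'I_n -> M * R, forall i,
    gen_submod S (ms i).1 /\ ~ sval p (ms i).2 /\ f (ms i).2 *: b i = g (ms i).1.
  apply: (@fchoice _ _ (fun i (x : M * R) => gen_submod S x.1 /\ ~ sval p x.2 /\ f x.2 *: b i = g x.1)) => i.
  by have [m0 [s0 H]] := Tb i; exists (m0, s0).
have [a Ha] : exists a : 'I_k -> 'I_n -> A, forall l, r (g (e l)) = \sum_i a l i *: b i.
  by apply: (@fchoice _ _ (fun l (c : 'I_n -> A) => r (g (e l)) = \sum_i c i *: b i)) => l; apply: rspan.
have [w [x [nw Hx]]] := cdenom Hf (fun li : 'I_k * 'I_n => a li.1 li.2).
have [coef Hcoef] : exists coef : M -> 'I_k -> R, forall m0, m0 = \sum_l coef m0 l *: e l.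
  by apply: (@fchoice _ _ (fun m0 (c : 'I_k -> R) => m0 = \sum_l c l *: e l)) => m0; apply: Hes.
have uniqc (c c' : 'I_n -> A) : \sum_i c i *: b i = \sum_i c' i *: b i -> forall i, c i = c' i.
  move=> E i; apply/eqP; rewrite -subr_eq0; apply/eqP; apply: (Ib (fun i => c i - c' i)) => {i}.
  by rewrite (eq_bigr (fun i => c i *: b i - c' i *: b i)) ?sumrB ?E ?subrr // => i _; rewrite scalerBl.
have K1 (d : 'I_k -> R) : r (g (\sum_l d l *: e l)) = \sum_i (\sum_l f (d l) * a l i) *: b i.
  rewrite (gsum Hg) (rsum rlin).
  rewrite (eq_bigr (fun l => \sum_i (f (d l) * a l i) *: b i)); last first.
    by move=> l _; rewrite (gZ Hg) (rZ rlin) Ha scaler_sumr; apply: eq_bigr => i _; rewrite scalerA.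
  by rewrite exchange_big; apply: eq_bigr => i _; rewrite scaler_suml.
pose J (i : 'I_n) (z : R) := exists d : 'I_k -> R,
  \sum_l d l *: e l = 0 /\ z = \sum_l d l * x (l, i).
have HJ i : is_ideal (J i).
  split; first by exists (fun _ => 0); rewrite !big1 // => l _; rewrite ?scale0r ?mul0r.
  split.
    move=> z1 z2 [d1 [e1 ->]] [d2 [e2 ->]]; exists (fun l => d1 l + d2 l); split.
      by rewrite (eq_bigr (fun l => d1 l *: e l + d2 l *: e l)) ?big_split /= ?e1 ?e2 ?addr0 // => l _; rewrite scalerDl.
    by rewrite -big_split; apply: eq_bigr => l _; rewrite mulrDl.
  move=> r1 z [d [e1 ->]]; exists (fun l => r1 * d l); split.
    by rewrite (eq_bigr (fun l => r1 *: (d l *: e l))) -?scaler_sumr ?e1 ?scaler0 // => l _; rewrite scalerA.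
  by rewrite mulr_sumr; apply: eq_bigr => l _; rewrite mulrA.
have Jk i z : J i z -> exists v, ~ sval p v /\ v * z = 0.
  move=> [d [e1 ->]]; apply: (fker Hf).
  have E0 : \sum_i (0:A) *: b i = \sum_i (\sum_l f (d l) * a l i) *: b i.
    by rewrite -K1 e1 (g0 Hg) (r0 rlin) big1 // => i' _; rewrite scale0r.
  have e2 := uniqc _ _ E0 i; rewrite /= in e2.
  rewrite (fsum Hf) (eq_bigr (fun l => f w * (f (d l) * a l i))); last first.
    by move=> l _; rewrite (fM Hf) -(Hx (l, i)) /=; ring.
  by rewrite -mulr_sumr -e2 mulr0.
have [uf Huf] : exists uf : 'I_n -> R, forall i, ~ sval p (uf i) /\ forall z, J i z -> uf i * z = 0.
  apply: (@fchoice _ _ (fun i (u0 : R) => ~ sval p u0 /\ forall z, J i z -> u0 * z = 0)) => i.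
  exact: killer Hn (HJ i) (Jk i).
pose u := \prod_i uf i.
have nu : ~ sval p u by apply: nprod => i; case: (Huf i).
have uJ i z : J i z -> u * z = 0.
  move=> Jz; rewrite /u (prodD1 _ i) [uf i * _]mulrC -mulrA (proj2 (Huf i) z Jz) mulr0 //.
pose Phi i m0 := u * \sum_l coef m0 l * x (l, i).
have PhiE i m0 (c : 'I_k -> R) : m0 = \sum_l c l *: e l -> Phi i m0 = u * \sum_l c l * x (l, i).
  move=> Hc; apply/eqP; rewrite -subr_eq0 -mulrBr -sumrB; apply/eqP.
  rewrite (eq_bigr (fun l => (coef m0 l - c l) * x (l, i))) ?(uJ i) // => [|l _]; last by rewrite mulrBl.
  exists (fun l => coef m0 l - c l); split => //.
  rewrite (eq_bigr (fun l => coef m0 l *: e l - c l *: e l)) ?sumrB -?Hcoef -?Hc ?subrr // => l _.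
  by rewrite scalerBl.
have Phil i a0 m1 m2 : Phi i (a0 *: m1 + m2) = a0 * Phi i m1 + Phi i m2.
  rewrite (PhiE i _ (fun l => a0 * coef m1 l + coef m2 l)).
    rewrite /Phi (eq_bigr (fun l => a0 * (coef m1 l * x (l, i)) + coef m2 l * x (l, i))).
      by rewrite big_split /= -mulr_sumr; ring.
    by move=> l _; rewrite mulrDl mulrA.
  rewrite (eq_bigr (fun l => a0 *: (coef m1 l *: e l) + coef m2 l *: e l)).
    by rewrite big_split /= -scaler_sumr -!Hcoef.
  by move=> l _; rewrite scalerDl scalerA.
pose m j := (ms j).1; pose s j := (ms j).2.
have Hrel i j : \sum_l f (coef (m j) l) * a l i = if i == j then f (s j) else 0.
  have E1 : g (m j) = \sum_i (if i == j then f (s j) else 0) *: b i.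
    rewrite -(proj2 (proj2 (Hms j))) (bigD1 j) //= eqxx big1 ?addr0 // => i' /negbTE ->.
    by rewrite scale0r.
  have E2 : r (g (m j)) = g (m j).
    by apply: rid; rewrite E1; exists (fun i => if i == j then f (s j) else 0).
  have E3 := K1 (coef (m j)); rewrite -Hcoef E2 E1 in E3.
  by rewrite (uniqc _ _ E3 i).
have [V HV] : exists V : 'I_n * 'I_n -> R, forall ij, ~ sval p (V ij) /\
    V ij * (\sum_l coef (m ij.2) l * x (l, ij.1) - (if ij.1 == ij.2 then w * s ij.2 else 0)) = 0.
  apply: (@fchoice _ _ (fun (ij : 'I_n * 'I_n) (v : R) => ~ sval p v /\
    v * (\sum_l coef (m ij.2) l * x (l, ij.1) - (if ij.1 == ij.2 then w * s ij.2 else 0)) = 0)).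
  move=> [i j]; apply: (fker Hf) => /=.
  rewrite (fB Hf) (fsum Hf) (eq_bigr (fun l => f w * (f (coef (m j) l) * a l i))); last first.
    by move=> l _; rewrite (fM Hf) -(Hx (l, i)) /=; ring.
  rewrite -mulr_sumr Hrel; case: (i == j); first by rewrite (fM Hf) subrr.
  by rewrite mulr0 (f0 Hf) subrr.
exists m, Phi, (fun j => u * w * s j), (fun i j => V (i, j)); split.
- by move=> j; case: (Hms j).
- exact: Phil.
- by move=> j; apply: (prime_nmul (prime_nmul nu nw)); case: (Hms j) => _ [].
- by move=> i j; case: (HV (i, j)).
move=> i j; transitivity (u * (V (i, j) * (\sum_l coef (m j) l * x (l, i) - (if i == j then w * s j else 0)))).
  by rewrite /Phi; case: (i == j); ring.
by rewrite (proj2 (HV (i, j))) mulr0.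
Qed.
End DataP.

Lemma free0 (A : pzRingType) (N : lmodType A) (T : N -> Prop) : has_free_summand_in T 0.
Proof.
exists (fun _ => 0); split; first by case.
split; first by move=> c _ [].
exists (fun _ => 0); split; first by move=> *; rewrite scaler0 addr0.
split; first by move=> y; exists (fun _ => 0); rewrite big_ord0.
by move=> y [c ->]; rewrite big_ord0.
Qed.

Lemma maxlem (P : nat -> Prop) (t : nat) :
  (forall n, P n -> (n <= t)%N) -> P 0 -> exists d, P d /\ forall n, P n -> (n <= d)%N.
Proof.
elim: t => [|t IH] Hle H0; first by exists 0%N; split.
case: (classic (P t.+1)) => Ht; first by exists t.+1; split.
apply: IH => // n Pn; have := Hle n Pn; rewrite leq_eqVlt => /orP [/eqP e|] //.
by subst.
Qed.

Theorem lemma3p5 (R : comNzRingType) (M : lmodType R)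
    (X : spec R -> Prop) (S : M -> Prop) (t : nat)
    (Rp : spec R -> comUnitRingType) (f : forall p, R -> Rp p)
    (Mp : forall p, lmodType (Rp p)) (g : forall p, M -> Mp p) :
  noetherian R -> fin_gen M -> basic X ->
  (forall p, ring_localization p (f p)) ->
  (forall p, module_localization p (f p) (g p)) ->
  zariski_closed_in X
    (fun p => X p /\ exists d, is_delta p (f p) (g p) S d /\ (d <= t)%N).
Proof.
move=> Hn [es Hes] _ Hf Hg.
have spread p n : has_free_summand_in (loc_submod p (f p) (g p) S) n ->
    exists u, ~ sval p u /\ forall q, ~ sval q u ->
      has_free_summand_in (loc_submod q (f q) (g q) S) n.
  move=> H; have [m [Phi [kap [V [Sm Hl nk nV HV]]]]] := data_p (Hf p) (Hg p) Hn Hes H.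
  exists ((\prod_j kap j) * \prod_(ij : 'I_n * 'I_n) V ij.1 ij.2); split.
    by apply: prime_nmul; apply: nprod => // [[i j]]; apply: nV.
  move=> q nq; apply: (build_q (Hf q) (Hg q) Sm Hl).
    by move=> i; apply: (nprod_inv (i:=i) (nmul_l nq)).
  move=> i j; have nv : ~ sval q (V i j) := nprod_inv (i:=(i, j)) (F := fun ij : 'I_n * 'I_n => V ij.1 ij.2) (nmul_r nq).
  have := fkill (Hf q) nv (HV i j); rewrite (fB (Hf q)) => /eqP; rewrite subr_eq0 => /eqP ->.
  by case: (i == j); rewrite ?(f0 (Hf q)).
exists (fun x => forall q : spec R, ~ sval q x ->
  exists n, (t < n)%N /\ has_free_summand_in (loc_submod q (f q) (g q) S) n).
move=> p; split.
  move=> [Xp [d [[Hd Hmax] Hdt]]]; split => // x Ix; apply: NNPP => nx.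
  have [n [tn Hn']] := Ix p nx; have nd := Hmax n Hn'.
  by have := leq_trans nd Hdt; rewrite leqNgt tn.
move=> [Xp HI]; split => //.
have Hle n : has_free_summand_in (loc_submod p (f p) (g p) S) n -> (n <= t)%N.
  move=> H; rewrite leqNgt; apply/negP => tn.
  have [u [nu Hu]] := spread p n H; apply: nu; apply: HI => q nq.
  by exists n; split => //; apply: Hu.
have [d [Hd Hmax]] := maxlem Hle (free0 _).
by exists d; split; [split | apply: Hle].
Qed.
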